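(* Let $p,q$ be coprime positive integers with $q\ge 2$. Let $(F_n)_{n\ge0}$ and $(G_n)_{n\ge0}$ be sequences of rational numbers, neither identically zero, each satisfying $X_n=\frac{p}{q}X_{n-1}-X_{n-2}$ for all $n\ge2$. Write $F_n=\frac{f_n}{f_n'}$ and $G_n=\frac{g_n}{g_n'}$ in reduced form. If $F_0G_1-F_1G_0\neq 0$, then $\gcd(f_n,g_n)$ is bounded independently of $n$. *)

(* Defs.v *)
From mathcomp Require Import all_boot all_order all_algebra.
Set Implicit Arguments. Unset Strict Implicit. Unset Printing Implicit Defensive.
Import Order.TTheory GRing.Theory Num.Theory.
Local Open Scope ring_scope.

Definition rec_pq (p q : nat) (X : nat -> rat) : Prop :=
  forall n : nat, X n.+2 = (p%:Q / q%:Q) * X n.+1 - X n.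

(* Main.v *)
Require Import Defs.
From Stdlib Require Classical_Prop.
From mathcomp Require Import all_boot all_order all_algebra.
From mathcomp Require Import ring lra zify.
Import Order.TTheory GRing.Theory Num.Theory.
Set Implicit Arguments. Unset Strict Implicit.
Local Open Scope ring_scope.

Definition Vl (l : nat) (x : int) : nat := logn l `|x|%N.
Definition dv (l k : nat) (x : int) : bool := ((l ^ k)%N%:Z %| x)%Z.

Lemma dvV l k x : prime l -> x != 0 -> dv l k x = (k <= Vl l x)%N.
Proof. by move=> pl x0; rewrite /dv dvdzE /= pfactor_dvdn // absz_gt0. Qed.

Lemma dv0 l k : dv l k 0.
Proof. exact: dvdz0. Qed.

Lemma dvW l k k' x : (k' <= k)%N -> dv l k x -> dv l k' x.
Proof.
move=> kk; rewrite /dv !dvdzE /= => H; apply: dvdn_trans H.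
by rewrite dvdn_exp2l.
Qed.

Lemma dvVV l x : prime l -> dv l (Vl l x) x.
Proof.
move=> pl; have [->|x0] := eqVneq x 0; first exact: dv0.
by rewrite dvV.
Qed.

Lemma VlM l x y : x != 0 -> y != 0 -> Vl l (x * y) = (Vl l x + Vl l y)%N.
Proof. by move=> x0 y0; rewrite /Vl abszM lognM // absz_gt0. Qed.

Lemma dvB l k x y : dv l k x -> dv l k y -> dv l k (x - y).
Proof. by move=> hx hy; rewrite /dv rpredB. Qed.

Lemma dvD l k x y : dv l k x -> dv l k y -> dv l k (x + y).
Proof. by move=> hx hy; rewrite /dv rpredD. Qed.

Lemma dvN l k x : dv l k (- x) = dv l k x.
Proof. by rewrite /dv rpredN. Qed.

Lemma Vl_exact l k x : prime l -> x != 0 -> dv l k x -> ~~ dv l k.+1 x -> Vl l x = k.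
Proof. by move=> pl x0; rewrite !dvV // => h1; rewrite -ltnNge ltnS => h2; apply/eqP; rewrite eqn_leq h1 h2. Qed.

Lemma Vl_add l x y : prime l -> x != 0 -> dv l (Vl l x).+1 y ->
  x + y != 0 /\ Vl l (x + y) = Vl l x.
Proof.
move=> pl x0 hy.
have hx : dv l (Vl l x) x by apply: dvVV.
have hy' : dv l (Vl l x) y by apply: dvW hy.
have nd : ~~ dv l (Vl l x).+1 (x + y).
  apply/negP => h.
  have : dv l (Vl l x).+1 ((x + y) - y) by apply: dvB.
  by rewrite addrK dvV // ltnn.
have nz : x + y != 0 by apply: contraNneq nd => ->; apply: dv0.
split=> //; apply: Vl_exact => //; exact: dvD.
Qed.
Lemma VlMp l p x : prime l -> ~~ (l %| p)%N -> x != 0 -> Vl l (p%:Z * x) = Vl l x.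
Proof.
move=> pl lp x0; have p0 : p%:Z != 0 by apply: contraNneq lp => -[->].
rewrite VlM // /Vl /= logn_coprime //; by rewrite prime_coprime.
Qed.

Lemma Vlq2 l q x : (0 < q)%N -> x != 0 -> Vl l ((q%:Z)^+2 * x) = (2 * logn l q + Vl l x)%N.
Proof.
move=> q0 x0; rewrite VlM //; last by rewrite expf_neq0 // -lt0n.
by rewrite /Vl abszX /= lognX.
Qed.

Lemma logn_q_gt0 l q : prime l -> (l %| q)%N -> (0 < q)%N -> (0 < logn l q)%N.
Proof. by move=> pl lq q0; rewrite -(pfactor_dvdn 1) // expn1. Qed.

Definition Bp l q (y : nat -> int) j :=
  (y j != 0) && dv l (Vl l (y j) + logn l q).+1 (y j.+1).

Lemma Bback l p q (y : nat -> int) j :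
  prime l -> (l %| q)%N -> ~~ (l %| p)%N -> (0 < q)%N ->
  (forall n, y n.+2 = p%:Z * y n.+1 - (q%:Z)^+2 * y n) ->
  Bp l q y j.+1 -> Bp l q y j /\ Vl l (y j.+1) = (Vl l (y j) + 2 * logn l q)%N.
Proof.
move=> pl lq lp q0 rec /andP[y1 hy2].
have v1 := logn_q_gt0 pl lq q0.
have e : (q%:Z)^+2 * y j = p%:Z * y j.+1 + - y j.+2 by rewrite rec; ring.
have p0 : p%:Z * y j.+1 != 0 by rewrite mulf_neq0 //; apply: contraNneq lp => -[->].
have := @Vl_add l (p%:Z * y j.+1) (- y j.+2) pl p0.
rewrite VlMp // dvN -e => -[]; first by apply: dvW hy2; lia.
move=> nz; rewrite Vlq2 //; last by apply: contraNneq nz => ->; rewrite mulr0.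
have yj : y j != 0 by apply: contraNneq nz => ->; rewrite mulr0.
move=> hV; split; last by lia.
rewrite /Bp yj /= dvV //; lia.
Qed.

Lemma Bchain l p q (y : nat -> int) n :
  prime l -> (l %| q)%N -> ~~ (l %| p)%N -> (0 < q)%N ->
  (forall n, y n.+2 = p%:Z * y n.+1 - (q%:Z)^+2 * y n) ->
  Bp l q y n -> (2 * logn l q * n <= Vl l (y n))%N.
Proof.
move=> pl lq lp q0 rec; elim: n => [|n IH] h; first by rewrite muln0.
have [h1 h2] := Bback pl lq lp q0 rec h.
have := IH h1; lia.
Qed.

Lemma Afwd l p q (y : nat -> int) j :
  prime l -> (l %| q)%N -> ~~ (l %| p)%N -> (0 < q)%N ->
  (forall n, y n.+2 = p%:Z * y n.+1 - (q%:Z)^+2 * y n) ->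
  ~~ Bp l q y j -> (y j != 0) || (y j.+1 != 0) ->
  [/\ y j.+1 != 0, y j.+2 != 0, Vl l (y j.+2) = Vl l (y j.+1) & ~~ Bp l q y j.+1].
Proof.
move=> pl lq lp q0 rec nB nz.
have v1 := logn_q_gt0 pl lq q0.
have pnz : p%:Z != 0 by apply: contraNneq lp => -[->].
suff [h1 h2 h3] : [/\ y j.+1 != 0, y j.+2 != 0 & Vl l (y j.+2) = Vl l (y j.+1)].
  split=> //; rewrite /Bp h1 /= dvV // h3; lia.
have [yj0|yj0] := eqVneq (y j) 0.
  rewrite yj0 eqxx /= in nz.
  have e : y j.+2 = p%:Z * y j.+1 by rewrite rec yj0; ring.
  by rewrite e VlMp // mulf_neq0.
move: nB; rewrite /Bp yj0 /= => nd.
have y1 : y j.+1 != 0 by apply: contraNneq nd => ->; apply: dv0.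
move: nd; rewrite dvV // -ltnNge ltnS => hle.
have e : y j.+2 = p%:Z * y j.+1 + - ((q%:Z)^+2 * y j) by rewrite rec.
have p0 : p%:Z * y j.+1 != 0 by rewrite mulf_neq0.
have := @Vl_add l (p%:Z * y j.+1) (- ((q%:Z)^+2 * y j)) pl p0.
rewrite -e VlMp // dvN => -[].
  rewrite dvV ?Vlq2 //; first lia.
  by rewrite mulf_neq0 // expf_neq0 // -lt0n.
by move=> -> ->.
Qed.

Lemma Aconst l p q (y : nat -> int) j :
  prime l -> (l %| q)%N -> ~~ (l %| p)%N -> (0 < q)%N ->
  (forall n, y n.+2 = p%:Z * y n.+1 - (q%:Z)^+2 * y n) ->
  ~~ Bp l q y j -> (y j != 0) || (y j.+1 != 0) ->
  forall k, [/\ ~~ Bp l q y (j + k), y (j + k).+1 != 0 & Vl l (y (j + k).+1) = Vl l (y j.+1)].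
Proof.
move=> pl lq lp q0 rec nB nz; elim=> [|k [h1 h2 h3]].
  rewrite addn0; have [a _ _ _] := Afwd pl lq lp q0 rec nB nz; by split.
have [a b c d] := Afwd pl lq lp q0 rec h1 (introT orP (or_intror h2)).
by rewrite addnS; split=> //; rewrite c.
Qed.

Lemma single l p q (y : nat -> int) :
  prime l -> (l %| q)%N -> ~~ (l %| p)%N -> (0 < q)%N ->
  (forall n, y n.+2 = p%:Z * y n.+1 - (q%:Z)^+2 * y n) ->
  (forall j, (y j != 0) || (y j.+1 != 0)) ->
  (forall j, Bp l q y j) \/
  exists N, forall n, (N <= n)%N -> ~~ dv l (n * logn l q).+1 (y n).
Proof.
move=> pl lq lp q0 rec nz.
have v1 := logn_q_gt0 pl lq q0.
case: (Classical_Prop.classic (exists j, ~~ Bp l q y j)) => [[j nB]|H]; last first.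
  left=> j; apply/negPn/negP => h; apply: H; by exists j.
right; exists (maxn j.+1 (Vl l (y j.+1))) => n; rewrite geq_max => /andP[h1 h2].
have := Aconst pl lq lp q0 rec nB (nz j) (n - j.+1).
have -> : (j + (n - j.+1)).+1 = n by lia.
move=> [_ a b]; rewrite dvV // b -ltnNge ltnS.
by apply: leq_trans h2 _; rewrite leq_pmulr.
Qed.

Lemma dvM l a b x y : dv l a x -> dv l b y -> dv l (a + b) (x * y).
Proof. by move=> hx hy; rewrite /dv expnD PoszM; apply: dvdz_mul. Qed.

Lemma bothB l p q (y z : nat -> int) (M : int) :
  prime l -> (l %| q)%N -> ~~ (l %| p)%N -> (0 < q)%N ->
  (forall n, y n.+2 = p%:Z * y n.+1 - (q%:Z)^+2 * y n) ->
  (forall n, z n.+2 = p%:Z * z n.+1 - (q%:Z)^+2 * z n) ->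
  (forall n, y n * z n.+1 - y n.+1 * z n = (q%:Z)^+(2 * n) * M) -> M != 0 ->
  (forall j, Bp l q y j) -> (forall j, Bp l q z j) -> False.
Proof.
move=> pl lq lp q0 recy recz cas M0 By Bz.
have v1 := logn_q_gt0 pl lq q0.
set n := Vl l M.
have cy := Bchain pl lq lp q0 recy (By n).
have cz := Bchain pl lq lp q0 recz (Bz n).
move: (By n) (Bz n) => /andP[y0 y1] /andP[z0 z1].
have d1 := dvM (dvVV (y n) pl) z1.
have d2 := dvM y1 (dvVV (z n) pl).
have : dv l (Vl l (y n) + (Vl l (z n) + logn l q).+1) ((q%:Z)^+(2 * n) * M).
  rewrite -cas; apply: dvB => //; apply: dvW d2; lia.
have qn : (q%:Z)^+(2 * n) != 0 by rewrite expf_neq0 // -lt0n.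
rewrite dvV ?mulf_neq0 // VlM //.
have -> : Vl l ((q%:Z)^+(2 * n)) = (2 * n * logn l q)%N by rewrite /Vl abszX /= lognX.
nia.
Qed.

Lemma perprime l p q (y z : nat -> int) (M : int) :
  prime l -> (l %| q)%N -> ~~ (l %| p)%N -> (0 < q)%N ->
  (forall n, y n.+2 = p%:Z * y n.+1 - (q%:Z)^+2 * y n) ->
  (forall n, z n.+2 = p%:Z * z n.+1 - (q%:Z)^+2 * z n) ->
  (forall n, y n * z n.+1 - y n.+1 * z n = (q%:Z)^+(2 * n) * M) -> M != 0 ->
  exists N, forall n, (N <= n)%N ->
    ~~ (dv l (n * logn l q).+1 (y n) && dv l (n * logn l q).+1 (z n)).
Proof.
move=> pl lq lp q0 recy recz cas M0.
have qn n : (q%:Z)^+(2 * n) * M != 0 by rewrite mulf_neq0 // expf_neq0 // -lt0n.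
have nzy j : (y j != 0) || (y j.+1 != 0).
  rewrite -negb_and; apply/negP => /andP[/eqP a /eqP b]; move: (qn j); by rewrite -cas a b !mul0r subrr eqxx.
have nzz j : (z j != 0) || (z j.+1 != 0).
  rewrite -negb_and; apply/negP => /andP[/eqP a /eqP b]; move: (qn j); by rewrite -cas a b !mulr0 subrr eqxx.
case: (single pl lq lp q0 recy nzy) => [By|[N HN]].
  case: (single pl lq lp q0 recz nzz) => [Bz|[N HN]].
    by case: (bothB pl lq lp q0 recy recz cas M0 By Bz).
  by exists N => n /HN h; rewrite negb_and h orbT.
by exists N => n /HN h; rewrite negb_and h.
Qed.

Lemma allN (s : seq nat) (P : nat -> nat -> Prop) :
  (forall l, l \in s -> exists N, forall n, (N <= n)%N -> P l n) ->
  exists N, forall l, l \in s -> forall n, (N <= n)%N -> P l n.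
Proof.
elim: s => [|a s IH] H; first by exists 0%N.
have [N1 H1] := H a (mem_head a s).
have [N2 H2] : exists N, forall l, l \in s -> forall n, (N <= n)%N -> P l n.
  by apply: IH => l ls; apply: H; rewrite inE ls orbT.
exists (maxn N1 N2) => l; rewrite inE => /orP[/eqP->|ls] n; rewrite geq_max => /andP[a1 a2].
  exact: H1.
exact: H2.
Qed.

Fixpoint pr (a b : int) (p q : nat) n : int * int :=
  if n is n'.+1 then let u := pr a b p q n' in (u.2, p%:Z * u.2 - (q%:Z)^+2 * u.1)
  else (a, b).
Definition sq a b p q n := (pr a b p q n).1.

Lemma sq_rec a b p q n : sq a b p q n.+2 = p%:Z * sq a b p q n.+1 - (q%:Z)^+2 * sq a b p q n.
Proof. by []. Qed.

Lemma sq_rat a b p q (X : nat -> rat) (C : rat) :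
  (0 < q)%N -> rec_pq p q X -> a%:~R = C * X 0%N -> b%:~R = C * q%:R * X 1%N ->
  forall n, (sq a b p q n)%:~R = C * (q%:R)^+n * X n.
Proof.
move=> q0 rec ha hb.
have qn : (q%:R : rat) != 0 by rewrite pnatr_eq0 -lt0n.
suff H : forall n, (sq a b p q n)%:~R = C * (q%:R)^+n * X n /\
                   (sq a b p q n.+1)%:~R = C * (q%:R)^+n.+1 * X n.+1 by move=> n; case: (H n).
elim=> [|n [h1 h2]]; first by rewrite /sq /= ha hb expr0 expr1 mulr1.
split=> //; rewrite sq_rec rmorphB /= !rmorphM /= h1 h2 rec.
have -> : ((p%:Z)%:~R : rat) = p%:R by [].
have -> : ((q%:Z)%:~R : rat) = q%:R by [].
by rewrite !exprS; field.
Qed.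

Lemma casor p q (y z : nat -> int) :
  (forall n, y n.+2 = p%:Z * y n.+1 - (q%:Z)^+2 * y n) ->
  (forall n, z n.+2 = p%:Z * z n.+1 - (q%:Z)^+2 * z n) ->
  forall n, y n * z n.+1 - y n.+1 * z n = (q%:Z)^+(2 * n) * (y 0%N * z 1%N - y 1%N * z 0%N).
Proof.
move=> ry rz; elim=> [|n IH]; first by rewrite muln0 expr0 mul1r.
rewrite ry rz mulnS exprD -mulrA -IH; ring.
Qed.

Lemma numdiv (X : rat) (y C : int) : X * C%:~R = y%:~R ->
  (`|numq X| * `|C| = `|y| * `|denq X|)%N.
Proof.
move=> h; rewrite -!abszM; congr absz; apply: (@intr_inj rat).
by rewrite !rmorphM /= numqE -h; ring.
Qed.

Theorem lemma3p3 (p q : nat) (F G : nat -> rat) :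
  (0 < p)%N -> (2 <= q)%N -> coprime p q ->
  (exists n, F n != 0) -> (exists n, G n != 0) ->
  rec_pq p q F -> rec_pq p q G ->
  F 0%N * G 1%N - F 1%N * G 0%N != 0 ->
  exists B : nat, forall n : nat,
    (gcdn `|numq (F n)|%N `|numq (G n)|%N <= B)%N.
Proof.
move=> p0 q2 cpq _ _ recF recG W0.
have q0 : (0 < q)%N by apply: leq_trans q2.
have qn : (q%:R : rat) != 0 by rewrite pnatr_eq0 -lt0n.
set dF0 := denq (F 0%N); set dF1 := denq (F 1%N).
set dG0 := denq (G 0%N); set dG1 := denq (G 1%N).
set C : int := dF0 * dF1 * dG0 * dG1.
have C0 : C != 0 by rewrite !mulf_neq0 ?denq_neq0.
set y := sq (numq (F 0%N) * (dF1 * dG0 * dG1)) (numq (F 1%N) * (dF0 * dG0 * dG1) * q%:Z) p q.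
set z := sq (numq (G 0%N) * (dF0 * dF1 * dG1)) (numq (G 1%N) * (dF0 * dF1 * dG0) * q%:Z) p q.
have qE : ((q%:Z)%:~R : rat) = q%:R by [].
have Hy : forall n, (y n)%:~R = C%:~R * (q%:R)^+n * F n.
  apply: sq_rat => //.
    by rewrite !rmorphM /= numqE /dF0; ring.
  by rewrite !rmorphM /= qE numqE /dF1; ring.
have Hz : forall n, (z n)%:~R = C%:~R * (q%:R)^+n * G n.
  apply: sq_rat => //.
    by rewrite !rmorphM /= numqE /dG0; ring.
  by rewrite !rmorphM /= qE numqE /dG1; ring.
have ry : forall n, y n.+2 = p%:Z * y n.+1 - (q%:Z)^+2 * y n by move=> n; apply: sq_rec.
have rz : forall n, z n.+2 = p%:Z * z n.+1 - (q%:Z)^+2 * z n by move=> n; apply: sq_rec.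
set M := y 0%N * z 1%N - y 1%N * z 0%N.
have cas := casor ry rz; rewrite -/M in cas.
have M0 : M != 0.
  have : (M%:~R : rat) = (C%:~R)^+2 * q%:R * (F 0%N * G 1%N - F 1%N * G 0%N).
    rewrite /M; move: (Hy 0%N) (Hy 1%N) (Hz 0%N) (Hz 1%N).
    move: (y 0%N) (y 1%N) (z 0%N) (z 1%N) => a b c e ha hb hc he.
    by rewrite rmorphB !rmorphM /= ha hb hc he expr0 expr1 /C !rmorphM; ring.
  move=> e; apply/negP => /eqP M0.
  have : (C%:~R ^+ 2 * q%:R * (F 0%N * G 1%N - F 1%N * G 0%N) : rat) != 0.
    by rewrite !mulf_neq0 // ?expf_neq0 // intr_eq0.
  by rewrite -e M0.
have [N HN] : exists N, forall l, l \in primes q -> forall n, (N <= n)%N ->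
    ~~ (dv l (n * logn l q).+1 (y n) && dv l (n * logn l q).+1 (z n)).
  apply: allN => l; rewrite mem_primes => /and3P[pl _ lq].
  have lp : ~~ (l %| p)%N.
    apply/negP => lp; have : (l %| gcdn p q)%N by rewrite dvdn_gcd lp lq.
    by rewrite (eqP cpq) dvdn1 => /eqP l1; rewrite l1 in pl.
  exact: perprime pl lq lp q0 ry rz cas M0.
have key : forall (X : nat -> rat) (w : nat -> int) n,
    (forall n, (w n)%:~R = C%:~R * (q%:R)^+n * X n) ->
    (`|numq (X n)| %| `|w n|)%N /\
    (forall l, prime l -> (l %| q)%N -> (l %| `|numq (X n)|)%N -> dv l (n * logn l q).+1 (w n)).
  move=> X w n Hw.
  have e : X n * (C * (q%:Z)^+n)%:~R = (w n)%:~R.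
    by rewrite Hw rmorphM /= rmorphXn /=; ring.
  have := numdiv e; rewrite abszM abszX /= => e2.
  have cop := coprime_num_den (X n).
  split.
    by rewrite -(Gauss_dvdl _ cop) -e2 dvdn_mulr.
  move=> l pl lq ln.
  have ld : coprime (l ^ (n * logn l q).+1) `|denq (X n)|.
    rewrite coprime_pexpl // prime_coprime //; apply/negP => ld.
    have : (l %| gcdn `|numq (X n)| `|denq (X n)|)%N by rewrite dvdn_gcd ln ld.
    by rewrite (eqP cop) dvdn1 => /eqP l1; rewrite l1 in pl.
  rewrite /dv dvdzE /= -(Gauss_dvdl _ ld) -e2 expnS.
  apply: dvdn_mul => //; rewrite mulnC expnM; apply: dvdn_mull.
  by apply: dvdn_exp2r; apply: pfactor_dvdnn.
exists (maxn `|M| (\max_(i < N) gcdn `|numq (F i)| `|numq (G i)|)) => n.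
case: (ltnP n N) => hn.
  apply: leq_trans (leq_maxr _ _).
  exact: (@leq_bigmax _ (fun i : 'I_N => gcdn `|numq (F i)| `|numq (G i)|) (Ordinal hn)).
apply: leq_trans (leq_maxl _ _).
set d := gcdn _ _.
have [d0|dpos] := posnP d; first by rewrite d0.
have [fy Fl] := key F y n Hy.
have [gz Gl] := key G z n Hz.
have dy : (d %| `|y n|)%N by apply: dvdn_trans fy; apply: dvdn_gcdl.
have dz : (d %| `|z n|)%N by apply: dvdn_trans gz; apply: dvdn_gcdr.
have cdq : coprime d q.
  apply/negPn/negP => ncop.
  have g1 : (1 < gcdn d q)%N.
    by rewrite ltn_neqAle eq_sym ncop /= gcdn_gt0 dpos.
  set l := pdiv (gcdn d q).
  have pl : prime l by apply: pdiv_prime.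
  have ld : (l %| d)%N by apply: dvdn_trans (pdiv_dvd _) (dvdn_gcdl _ _).
  have lq : (l %| q)%N by apply: dvdn_trans (pdiv_dvd _) (dvdn_gcdr _ _).
  have lf : (l %| `|numq (F n)|)%N by apply: dvdn_trans ld (dvdn_gcdl _ _).
  have lg : (l %| `|numq (G n)|)%N by apply: dvdn_trans ld (dvdn_gcdr _ _).
  have lpr : l \in primes q by rewrite mem_primes pl q0 lq.
  by move: (HN l lpr n hn); rewrite (Fl l pl lq lf) (Gl l pl lq lg).
have dM : (d %| `|((q%:Z)^+(2 * n) * M)%R|)%N.
  suff : ((d%:Z) %| (q%:Z)^+(2 * n) * M)%Z by rewrite dvdzE.
  rewrite -cas.
  have hy : ((d%:Z) %| y n)%Z by rewrite dvdzE.
  have hz : ((d%:Z) %| z n)%Z by rewrite dvdzE.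
  by apply: rpredB; [apply: dvdz_mulr | apply: dvdz_mull].
move: dM; rewrite abszM abszX /= Gauss_dvdr; last by apply: coprimeXr.
by apply: dvdn_leq; rewrite absz_gt0.
Qed.
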